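(* Let $d \ge 1$, $p \in [0,1/2)$, $\mathbf{x} \in \mathbb{R}^d$, $G > 0$, $\lambda > 0$. Let measurements $y_k = \langle \mathbf{x}, \mathbf{a}_k\rangle + \epsilon_k$ ($k = 0,1,\dots$) be given, where $\epsilon_k = \xi_k\nu_k$ with $\xi_k$ an indicator equal to $1$ with probability $p$, independent of all other variables, and $\nu_k$ arbitrary (possibly dependent on $\mathbf{x}$ and the measurement vectors). Let $\mathcal{F}_k$ be the $\sigma$-algebra generated by $\{\mathbf{a}_0,\epsilon_0\},\dots,\{\mathbf{a}_{k-1},\epsilon_{k-1}\}$, and assume each $\mathbf{a}_k \in \mathbb{R}^d$ has unit norm and is independent of $\mathcal{F}_k$, the vectors $\sqrt d\,\mathbf{a}_k$ are i.i.d. mean-zero isotropic, and for every $\mathcal{F}_k$-measurable $\mathbf{u}$, $\mathbb{E}_{\mathbf{a}_k}[|\langle \mathbf{u},\mathbf{a}_k\rangle| \mid \mathbf{u}] \ge \widetilde{C}\|\mathbf{u}\|_2/\sqrt d$ for a constant $\widetilde C > 0$. Let $\mathbf{x}_0 = 0$, $\mathbf{x}_{k+1} = \mathbf{x}_k + G\lambda^{-k}\mathrm{sign}(y_k - \langle \mathbf{x}_k,\mathbf{a}_k\rangle)\mathbf{a}_k$, $\mathbf{u}_k := \lambda^k(\mathbf{x} - \mathbf{x}_k)/G$ and $Y_k := \|\mathbf{u}_k\|_2^2$, so that $$Y_{k+1} = \lambda^2\Big\{\|\mathbf{u}_k\|^2 - 2\langle \mathbf{u}_k,\mathbf{a}_k\rangle\,\mathrm{sign}\big(\langle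 \mathbf{u}_k,\mathbf{a}_k\rangle + \lambda^k\epsilon_k/G\big) + 1\Big\}.$$ Suppose $$1 < \lambda^2 \le 1 + \widetilde{C}^2\frac{(1-2p)^2}{9d} < \frac{50}{49},$$ and set $a = \frac{1}{2(\lambda^2-1)}$, $\eta = c^*\sqrt{\lambda^2-1}$ with $$c^* = \frac{1}{8\lambda^2}\Big[\frac{\sqrt2\,\lambda^2(1-2p)\widetilde C}{\sqrt d} - \sqrt{\lambda^2-1}\Big(\frac32 + \lambda^2\Big)\Big].$$ Then $$\mathbb{E}\big[e^{\eta(Y_{k+1} - a)}\mathbb{1}_{\{Y_k \le a\}} \mid \mathcal{F}_k\big] \le \exp\Big\{\frac{\widetilde C(1-2p)}{3\sqrt d}\Big\}.$$
   Context: $\mathrm{sign}$ is the sign function. *)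

(* Defs.v *)
From HB Require Import structures.
From mathcomp Require Import all_boot all_order all_algebra.
From mathcomp Require Import all_classical all_reals all_analysis.
Set Implicit Arguments. Unset Strict Implicit. Unset Printing Implicit Defensive.
Import Order.TTheory GRing.Theory Num.Theory.
Local Open Scope classical_set_scope.
Local Open Scope ring_scope.

Definition dotv (R : realType) (d : nat) (u v : 'rV[R]_d) : R :=
  \sum_(i < d) u ord0 i * v ord0 i.
Definition norm2 (R : realType) (d : nat) (u : 'rV[R]_d) : R :=
  Num.sqrt (dotv u u).

Definition vcoord (R : realType) (T : Type) (d : nat)
  (X : T -> 'rV[R]_d) (i : 'I_d) : T -> R := fun w => X w ord0 i.

Definition sigma_vec (R : realType) (T : Type) (d : nat)
  (X : T -> 'rV[R]_d) : set (set T) :=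
  <<s [set A | exists i (B : set R), measurable B /\ A = vcoord X i @^-1` B] >>.

Definition borel_vec (R : realType) (d : nat) : set (set 'rV[R]_d) :=
  <<s [set S | exists i (B : set R), measurable B /\
               S = (fun v : 'rV[R]_d => v ord0 i) @^-1` B] >>.

Definition indep_sigma (R : realType) (dT : measure_display)
  (T : measurableType dT) (P : probability T R) (F1 F2 : set (set T)) :=
  forall A B, F1 A -> F2 B -> P (A `&` B) = (P A * P B)%E.

Definition noise (R : realType) (T : Type) (xi : nat -> T -> bool)
  (nu : nat -> T -> R) (k : nat) : T -> R :=
  fun w => (xi k w)%:R * nu k w.

Definition filt (R : realType) (T : Type) (d : nat) (a : nat -> T -> 'rV[R]_d)
  (eps : nat -> T -> R) (k : nat) : set (set T) :=
  <<s [set A | exists j, (j < k)%N /\ exists B : set R, measurable B /\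
           ((exists i, A = vcoord (a j) i @^-1` B) \/ A = eps j @^-1` B)] >>.

(* sigma-algebra generated by all variables other than xi_k:
   all a_j, all nu_j, and xi_j for j <> k *)
Definition others_xi (R : realType) (T : Type) (d : nat)
  (a : nat -> T -> 'rV[R]_d) (xi : nat -> T -> bool) (nu : nat -> T -> R)
  (k : nat) : set (set T) :=
  <<s [set A | exists j,
        (exists i (B : set R), measurable B /\ A = vcoord (a j) i @^-1` B)
     \/ (exists B : set R, measurable B /\ A = nu j @^-1` B)
     \/ (j <> k /\ A = [set w | xi j w])] >>.

Fixpoint iterx (R : realType) (T : Type) (d : nat) (x : 'rV[R]_d)
  (G lam : R) (a : nat -> T -> 'rV[R]_d) (eps : nat -> T -> R)
  (k : nat) (w : T) : 'rV[R]_d :=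
  match k with
  | 0 => 0
  | k'.+1 =>
      let xk := iterx x G lam a eps k' w in
      let yk := dotv x (a k' w) + eps k' w in
      xk + (G * lam ^- k' * Num.sg (yk - dotv xk (a k' w))) *: a k' w
  end.

Definition uvec (R : realType) (T : Type) (d : nat) (x : 'rV[R]_d)
  (G lam : R) (a : nat -> T -> 'rV[R]_d) (eps : nat -> T -> R)
  (k : nat) (w : T) : 'rV[R]_d :=
  (lam ^+ k / G) *: (x - iterx x G lam a eps k w).
Definition Yseq (R : realType) (T : Type) (d : nat) (x : 'rV[R]_d)
  (G lam : R) (a : nat -> T -> 'rV[R]_d) (eps : nat -> T -> R)
  (k : nat) (w : T) : R :=
  norm2 (uvec x G lam a eps k w) ^+ 2.

(* "E[X | F] <= c almost surely", for a nonnegative random variable X,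
   stated through the defining property of conditional expectation:
   E[X 1_A] <= c P(A) for every A in F. *)
Definition cond_exp_le (R : realType) (dT : measure_display)
  (T : measurableType dT) (P : probability T R) (F : set (set T))
  (X : T -> R) (c : R) :=
  forall A, F A -> (\int[P]_(w in A) (X w)%:E <= c%:E * P A)%E.

(* Main.v *)
Require Import Defs.
From HB Require Import structures.
From mathcomp Require Import all_boot all_order all_algebra.
From mathcomp Require Import all_classical all_reals all_analysis.
From mathcomp Require Import ring lra measurable_realfun.
Import Order.TTheory GRing.Theory Num.Theory.
Local Open Scope classical_set_scope.
Local Open Scope ring_scope.

Lemma int_mono (R : realType) (dT : measure_display) (T : measurableType dT)
  (mu : {measure set T -> \bar R}) (D : set T) (f g : T -> R) :
  (forall x, D x -> 0 <= f x) -> (forall x, D x -> f x <= g x) ->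
  (\int[mu]_(x in D) (f x)%:E <= \int[mu]_(x in D) (g x)%:E)%E.
Proof.
move=> f0 fg.
have g0 : forall x, D x -> 0 <= g x by move=> x Dx; exact: le_trans (f0 x Dx) (fg x Dx).
have f0' : forall x, D x -> (0 <= (f x)%:E)%E by move=> x Dx; rewrite lee_fin f0.
have g0' : forall x, D x -> (0 <= (g x)%:E)%E by move=> x Dx; rewrite lee_fin g0.
rewrite (ge0_integralE _ f0') (ge0_integralE _ g0').
apply: ereal_sup_le => _ [h hh <-]; exists h => //= x.
apply: le_trans (hh x) _.
rewrite /patch; case: ifP => // /[1!inE] Dx.
by rewrite lee_fin fg.
Qed.

Lemma dot_ge0 (R : realType) d (u : 'rV[R]_d) : 0 <= dotv u u.
Proof. by rewrite /dotv; apply: sumr_ge0 => i _; rewrite -expr2 sqr_ge0. Qed.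

Lemma norm2_sq (R : realType) d (u : 'rV[R]_d) : norm2 u ^+ 2 = dotv u u.
Proof. by rewrite /norm2 sqr_sqrtr // dot_ge0. Qed.

Lemma dot_expand (R : realType) d (u a : 'rV[R]_d) (c e : R) :
  dotv (c *: u - e *: a) (c *: u - e *: a) =
  c ^+ 2 * dotv u u - 2 * c * e * dotv u a + e ^+ 2 * dotv a a.
Proof.
rewrite /dotv.
transitivity (\sum_(i < d) (c ^+ 2 * (u ord0 i * u ord0 i) - 2 * c * e * (u ord0 i * a ord0 i)
    + e ^+ 2 * (a ord0 i * a ord0 i))).
  by apply: eq_bigr => i _; rewrite !mxE; ring.
by rewrite big_split sumrB /= -!mulr_sumr.
Qed.
Lemma keyA (R : realFieldType) (L q s2 Y v s A Y' : R) :
  L = q^+2 + 1 -> 0 < q -> s2^+2 = 2 -> 0 < s2 ->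
  0 <= Y -> Y <= A -> 2 * q^+2 * A = 1 -> s^+2 <= 1 ->
  0 <= 2 * q^+2 * Y + 2 * s2 * q * s * v + s^+2 ->
  Y' = L * Y - 2 * L * s * v + L * s^+2 ->
  q * (Y' - A) <= q * (1/2 + L) + s2 * L.
Proof.
move=> hL hq hs2 s2p hY0 hYA hA hs H hY'.
have ha : 0 < s2 * q by apply: mulr_gt0.
rewrite -(ler_pM2l ha).
have Lp : 0 < L by rewrite hL; nra.
have f1 : 0 <= (q * L) * (2 * q^+2 * Y + 2 * s2 * q * s * v + s^+2).
  by apply: mulr_ge0 => //; apply: mulr_ge0; lra.
have f2 : 0 <= (s2 * q^+2 * L) * (1 - s^+2).
  apply: mulr_ge0; last lra. apply: mulr_ge0; last lra. apply: mulr_ge0; nra.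
have f4 : 0 <= (q * L) * (1 - s^+2).
  apply: mulr_ge0; last lra. apply: mulr_ge0; nra.
have f3 : 0 <= (s2 * L + 2 * q * L) * (1/2 - q^+2 * Y).
  apply: mulr_ge0; first nra. nra.
have e : s2 * q * (q * (1 / 2 + L) + s2 * L) = s2 * q^+2 * (1/2 + L) + 2 * q * L.
  by rewrite -hs2; ring.
rewrite e hY'.
have e2 : s2 * q * (q * (L * Y - 2 * L * s * v + L * s ^+ 2 - A)) =
   s2 * q^+2 * L * Y - q * L * (2 * s2 * q * s * v) + s2 * q^+2 * L * s^+2 - s2 * (q^+2 * A).
  by ring.
rewrite e2.
have e3 : q^+2 * A = 1/2 by lra.
rewrite e3.
have e4 : s2 * L = s2 * q^+2 + s2 by rewrite hL; ring.
move: f1 f2 f3 f4 e4.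
lra.
Qed.
Lemma keyB (R : realFieldType) (L q s2 B Z : R) :
  1 < L -> L < 50/49 -> 0 < q -> q <= B -> B < 1/7 -> s2^+2 = 2 -> 0 < s2 ->
  q * Z <= q * (1/2 + L) + s2 * L ->
  (1 / (8 * L) * (s2 * L * (3 * B) - q * (3/2 + L))) * q * Z <= B.
Proof.
move=> L1 L2 q0 qB B7 hs2 s2p hZ.
have s2b : s2 <= 3/2 by nra.
have s2l : 1 <= s2 by nra.
have Lp : 0 < 8 * L by lra.
set c := (1 / (8 * L) * (s2 * L * (3 * B) - q * (3/2 + L))).
have ce : c * (8 * L) = s2 * L * (3 * B) - q * (3/2 + L).
  rewrite /c; field; lra.
have c0 : 0 <= c.
  rewrite -(pmulr_lge0 _ Lp) ce.
  have g1 : q * (3/2 + L) <= B * (3/2 + L) by apply: ler_wpM2r => //; lra.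
  have g2 : 0 <= (s2 * L - 1) * B by apply: mulr_ge0; nra.
  nra.
have c1 : c <= 3 * s2 * B / 8.
  rewrite -(ler_pM2r Lp) ce. 
  have -> : 3 * s2 * B / 8 * (8 * L) = 3 * s2 * B * L by field.
  nra.
rewrite -mulrA.
apply: (le_trans (ler_wpM2l c0 hZ)).
apply: (le_trans (ler_wpM2r _ c1)); first nra.
have -> : 3 * s2 * B / 8 * (q * (1 / 2 + L) + s2 * L) = 3 * s2 * B * q * (1/2 + L) / 8 + 3 * (s2^+2) * B * L / 8 by ring.
rewrite hs2.
have h1 : s2 * q * (1/2 + L) <= 3/2 * (1/7) * (1/2 + 50/49).
  apply: ler_pM; try nra.
nra.
Qed.

Lemma uvec_succ (R : realType) (T : Type) (d : nat) (x : 'rV[R]_d)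
  (G lam : R) (a : nat -> T -> 'rV[R]_d) (eps : nat -> T -> R) k w :
  G != 0 -> lam != 0 ->
  uvec x G lam a eps k.+1 w = lam *: uvec x G lam a eps k w -
    (lam * Num.sg (dotv x (a k w) + eps k w - dotv (iterx x G lam a eps k w) (a k w)))
      *: a k w.
Proof.
move=> G0 l0; rewrite /uvec /=; apply/rowP => i; rewrite !mxE.
have lk : lam ^+ k != 0 by rewrite expf_neq0.
rewrite exprS; field.
by rewrite lk G0.
Qed.

Lemma filt_meas (R : realType) (dT : measure_display) (T : measurableType dT) d
  (a : nat -> T -> 'rV[R]_d) (eps : nat -> T -> R) k :
  (forall k i, measurable_fun setT (vcoord (a k) i)) ->
  (forall k, measurable_fun setT (eps k)) ->
  filt a eps k `<=` measurable.
Proof.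
move=> ha he; apply: smallest_sub; first exact: sigma_algebra_measurable.
move=> A [j [_ [B [mB [[i ->]| ->]]]]]; rewrite -[X in measurable X]setTI.
  exact: (ha _ _ measurableT B mB).
exact: (he _ measurableT B mB).
Qed.

Lemma noise_meas (R : realType) (dT : measure_display) (T : measurableType dT)
  (xi : nat -> T -> bool) (nu : nat -> T -> R) :
  (forall k, measurable_fun setT (nu k)) ->
  (forall k, measurable [set w | xi k w]) ->
  forall k, measurable_fun setT (noise xi nu k).
Proof.
move=> hnu hxi k; rewrite /noise; apply: measurable_funM => //.
have -> : (fun w => (xi k w)%:R) = (\1_[set w | xi k w] : T -> R).
  apply/funext => w; rewrite indicE; case hx: (xi k w); first by rewrite mem_set.
  by rewrite memNset //= hx.
exact: measurable_indic.
Qed.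
Theorem lemma4p2 (R : realType) (dT : measure_display) (T : measurableType dT)
  (P : probability T R) (d : nat) (p : R) (x : 'rV[R]_d) (G lam Ct : R)
  (a : nat -> T -> 'rV[R]_d) (xi : nat -> T -> bool) (nu : nat -> T -> R) :
  (1 <= d)%N ->
  0 <= p -> p < 1 / 2 ->
  0 < G -> 0 < lam -> 0 < Ct ->
  (* measurability of the variables *)
  (forall k i, measurable_fun setT (vcoord (a k) i)) ->
  (forall k, measurable_fun setT (nu k)) ->
  (forall k, measurable [set w | xi k w]) ->
  (* xi_k is an indicator equal to 1 with probability p,
     independent of all other variables *)
  (forall k, P [set w | xi k w] = p%:E) ->
  (forall k, indep_sigma P (<<s [set [set w | xi k w]] >>)
                           (others_xi a xi nu k)) ->
  (* a_k has unit norm and is independent of F_k *)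
  (forall k w, norm2 (a k w) = 1) ->
  (forall k, indep_sigma P (sigma_vec (a k)) (filt a (noise xi nu) k)) ->
  (* sqrt d a_k are identically distributed, mean-zero, isotropic *)
  (forall k S, borel_vec S -> P (a k @^-1` S) = P (a 0%N @^-1` S)) ->
  (forall k i, (\int[P]_w (Num.sqrt d%:R * a k w ord0 i)%:E = 0)%E) ->
  (forall k i j, (\int[P]_w ((Num.sqrt d%:R * a k w ord0 i) *
                             (Num.sqrt d%:R * a k w ord0 j))%:E
                  = ((i == j)%:R)%:E)%E) ->
  (* E_{a_k} |<u, a_k>| >= Ct ||u|| / sqrt d *)
  (forall k (v : 'rV[R]_d),
     ((Ct * norm2 v / Num.sqrt d%:R)%:E
        <= \int[P]_w (`|dotv v (a k w)|)%:E)%E) ->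
  1 < lam ^+ 2 ->
  lam ^+ 2 <= 1 + Ct ^+ 2 * (1 - 2 * p) ^+ 2 / (9 * d%:R) ->
  1 + Ct ^+ 2 * (1 - 2 * p) ^+ 2 / (9 * d%:R) < 50 / 49 ->
  let aa := 1 / (2 * (lam ^+ 2 - 1)) in
  let cstar := 1 / (8 * lam ^+ 2) *
      (Num.sqrt 2 * lam ^+ 2 * (1 - 2 * p) * Ct / Num.sqrt d%:R
       - Num.sqrt (lam ^+ 2 - 1) * (3 / 2 + lam ^+ 2)) in
  let eta := cstar * Num.sqrt (lam ^+ 2 - 1) in
  let Y := Yseq x G lam a (noise xi nu) in
  forall k : nat,
    cond_exp_le P (filt a (noise xi nu) k)
      (fun w => expR (eta * (Y k.+1 w - aa)) * (if Y k w <= aa then 1 else 0))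
      (expR (Ct * (1 - 2 * p) / (3 * Num.sqrt d%:R))).
Proof.
move=> d1 p0 p12 G0 l0 Ct0 ha hnu hxi _ _ hnorm _ _ _ _ _ L1 L2 L3 aa cstar eta Y k A hA.
set sd := Num.sqrt d%:R.
have sd0 : 0 < sd by rewrite sqrtr_gt0 ltr0n.
have sd2 : sd ^+ 2 = d%:R by rewrite sqr_sqrtr // ler0n.
set B := Ct * (1 - 2 * p) / (3 * sd).
have B0 : 0 < B by apply: divr_gt0; [apply: mulr_gt0; lra | lra].
have B2 : B ^+ 2 = Ct ^+ 2 * (1 - 2 * p) ^+ 2 / (9 * d%:R).
  by rewrite /B -sd2; field; rewrite gt_eqF.
set q := Num.sqrt (lam ^+ 2 - 1).
have q0 : 0 < q by rewrite sqrtr_gt0; lra.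
have q2 : q ^+ 2 = lam ^+ 2 - 1 by rewrite sqr_sqrtr //; lra.
have qB : q <= B by nra.
have B7 : B < 1 / 7 by nra.
pose s2 := Num.sqrt (2 : R).
have s20 : 0 < s2 by rewrite sqrtr_gt0.
have s22 : s2 ^+ 2 = 2 by rewrite sqr_sqrtr.
have mA : measurable A.
  exact: (@filt_meas R dT T d a (noise xi nu) k ha (@noise_meas _ _ _ xi nu hnu hxi) A hA).
have Xge0 : forall w, A w -> 0 <= expR (eta * (Y k.+1 w - aa)) * (if Y k w <= aa then 1 else 0).
  by move=> w _; apply: mulr_ge0; [exact: expR_ge0 | case: ifP].
apply: le_trans (@int_mono _ _ _ P A _ (fun _ => expR B) Xge0 _) _; last first.
  by rewrite integral_cst.
move=> w _; case: ifP => hy; last by rewrite mulr0 expR_ge0.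
rewrite mulr1 ler_expR.
move: hy; rewrite /Y /Yseq !norm2_sq uvec_succ ?gt_eqF // dot_expand => hy.
have haa : dotv (a k w) (a k w) = 1 by rewrite -norm2_sq hnorm expr1n.
rewrite haa.
set u := uvec _ _ _ _ _ k w in hy *.
set s := Num.sg _.
set v := dotv u (a k w).
have e : Num.sqrt 2 * lam ^+ 2 * (1 - 2 * p) * Ct / sd = s2 * lam ^+ 2 * (3 * B).
  by rewrite /B /s2; field; rewrite gt_eqF.
rewrite /eta /cstar e.
apply: keyB => //; first lra.
apply: (@keyA _ _ _ _ (dotv u u) v s).
- by rewrite q2; ring.
- by [].
- by [].
- by [].
- exact: dot_ge0.
- by [].
- by rewrite /aa q2; field; lra.
- by rewrite sqr_sg; case: (_ != 0); rewrite /= ?lexx ?ler01.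
- have := @dot_ge0 _ _ ((s2 * q) *: u - (- s) *: a k w : 'rV[R]_d).
  rewrite dot_expand haa.
  have -> : (s2 * q) ^+ 2 = 2 * q ^+ 2 by rewrite exprMn s22.
  rewrite sqrrN => h; rewrite /v /q in h *; lra.
- by ring.
Qed.
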